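(* Let $\Gamma$ be a finite Abelian group (written additively, identity $0$) and let $R, B$ be disjoint inverse-closed subsets of $\Gamma$ not containing $0$. Let $G = \mathrm{Cay}(\Gamma, B)$ have all edges coloured $1$ and $H = \mathrm{Cay}(\Gamma, R)$ have all edges coloured $2$, and colour $\mathrm{Cay}(\Gamma, B \cup R)$ by giving each edge the colour it has in $G$ or in $H$. Then in $\mathrm{Cay}(\Gamma, B \cup R)$, for every $v \in \Gamma$: (i) $\deg_1(v) = \deg^G(v)$ and $\deg_2(v) = \deg^H(v)$; (ii) $e_1[v] - e_2[v] = \left(e_1^G[v] - e_2^H[v]\right) + \left(e_2^H(N^G[v]) - e_1^G(N^H[v])\right)$; (iii) if moreover $(R + B) \cap R = \emptyset$ and $e_1^G[v] > e_2^H[v]$, then $e_1[v] > e_2[v]$.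
   Context: For a group $\Gamma$ and an inverse-closed subset $S$ not containing the identity, the Cayley graph $\mathrm{Cay}(\Gamma,S)$ has vertex set $\Gamma$ and edges $\{g,g+s\}$ for $g\in\Gamma$, $s\in S$. $R+B=\{r+b: r\in R, b\in B\}$. For an edge-coloured graph $X$, a set $S$ of vertices and a colour $j$, $e^X_j(S)$ is the number of edges coloured $j$ in the subgraph of $X$ induced by $S$; $N^X[v]$ is the closed neighbourhood of $v$ in $X$; $e^X_j[v]=e^X_j(N^X[v])$; $\deg_j(v)$ is the number of edges of colour $j$ at $v$. Quantities without superscript refer to $\mathrm{Cay}(\Gamma,B\cup R)$. *)

(* Defs.v *)
From HB Require Import structures.
From mathcomp Require Import all_boot all_order all_algebra.
Set Implicit Arguments. Unset Strict Implicit. Unset Printing Implicit Defensive.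
Import GRing.Theory.
Local Open Scope ring_scope.

(* An edge-coloured simple graph on a finite vertex type: an adjacency
   relation together with a colouring of (ordered pairs of) vertices; only
   the colours of adjacent pairs are meaningful. *)
Record cgraph (T : finType) := CGraph { cadj : rel T; ccol : T -> T -> nat }.

Section Graphs.
Variable T : finType.
Implicit Types (X : cgraph T) (S : {set T}) (v : T) (j : nat).

Definition cnbhd X v : {set T} := v |: [set w | cadj X v w].

Definition deg X v : nat := #|[set w | cadj X v w]|.

Definition degc X j v : nat := #|[set w | cadj X v w && (ccol X v w == j)]|.

Definition ecol X j S : nat :=
  #|[set E : {set T} | (E \subset S) &&
      [exists x, exists y, [&& x != y, cadj X x y, ccol X x y == j &
                               E == [set x; y]]]]|.

Definition ecolv X j v : nat := ecol X j (cnbhd X v).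
End Graphs.

Section Cayley.
Variable G : finZmodType.
Implicit Types (S B R : {set G}).

Definition inv_closed S := forall x, x \in S -> - x \in S.

Definition cay_col S (j : nat) : cgraph G :=
  CGraph (fun x y => y - x \in S) (fun _ _ => j).

Definition cay_union B R : cgraph G :=
  CGraph (fun x y => y - x \in B :|: R)
         (fun x y => if y - x \in B then 1%N else 2%N).

Definition sumset (R B : {set G}) : {set G} :=
  [set r + b | r in R, b in B].
End Cayley.

(* Main.v *)
Require Import Defs.
From HB Require Import structures.
From mathcomp Require Import all_boot all_order all_algebra zify.
Import GRing.Theory Num.Theory.
Set Implicit Arguments. Unset Strict Implicit.
Local Open Scope ring_scope.

Definition PS (Gam : finZmodType) (D S T : {set Gam}) : {set Gam * Gam} :=
  [set p | [&& p.1 \in S, p.2 \in T & p.2 - p.1 \in D]].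
Definition pc (Gam : finZmodType) (D S T : {set Gam}) : nat :=
  (\sum_(x in S) \sum_(y in T) (((y - x)%R \in D) : nat))%N.

Lemma pcE (Gam : finZmodType) (D S T : {set Gam}) : pc D S T = #|PS D S T|.
Proof.
rewrite /pc pair_big_dep /= -sum1dep_card.
rewrite [RHS](eq_bigl (fun p : Gam * Gam => (p.1 \in S) && (p.2 \in T) && (p.2 - p.1 \in D))); last by move=> p; rewrite andbA.
rewrite [RHS]big_mkcondr /=; apply: eq_bigr => p _; by case: (_ \in D).
Qed.
Lemma pcU1l (Gam : finZmodType) (D S T : {set Gam}) v : v \notin S ->
  pc D (v |: S) T = (\sum_(y in T) (((y - v)%R \in D) : nat) + pc D S T)%N.
Proof. by move=> h; rewrite /pc big_setU1. Qed.

Lemma pcU1r (Gam : finZmodType) (D S T : {set Gam}) v : v \notin T ->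
  pc D S (v |: T) = (\sum_(x in S) (((v - x)%R \in D) : nat) + pc D S T)%N.
Proof. by move=> h; rewrite /pc -big_split /=; apply: eq_bigr => x _; rewrite big_setU1. Qed.

Lemma pcUl (Gam : finZmodType) (D S1 S2 T : {set Gam}) : [disjoint S1 & S2] ->
  pc D (S1 :|: S2) T = (pc D S1 T + pc D S2 T)%N.
Proof. by move=> h; rewrite /pc -bigU //=; apply: eq_bigl => x; rewrite !inE. Qed.

Lemma pcUr (Gam : finZmodType) (D S T1 T2 : {set Gam}) : [disjoint T1 & T2] ->
  pc D S (T1 :|: T2) = (pc D S T1 + pc D S T2)%N.
Proof. by move=> h; rewrite /pc -big_split /=; apply: eq_bigr => x _; rewrite -bigU //=; apply: eq_bigl => y; rewrite !inE. Qed.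

Lemma sum0 (Gam : finZmodType) (D T : {set Gam}) (f : Gam -> Gam) :
  (forall y, y \in T -> f y \notin D) -> (\sum_(y in T) ((f y \in D) : nat) = 0)%N.
Proof. by move=> h; rewrite big1 // => y /h /negbTE ->. Qed.

Lemma pcC (Gam : finZmodType) (D S T : {set Gam}) : inv_closed D ->
  pc D S T = pc D T S.
Proof.
move=> hD; rewrite /pc exchange_big /=; apply: eq_bigr => y _; apply: eq_bigr => x _.
have h : forall a : Gam, (a \in D) = (- a \in D).
  by move=> a; apply/idP/idP => [/hD//|/hD]; rewrite opprK.
by rewrite h opprB.
Qed.
Definition Ed (Gam : finZmodType) (D S : {set Gam}) : {set {set Gam}} :=
  [set E : {set Gam} | (E \subset S) &&
      [exists x, exists y, [&& x != y, y - x \in D & E == [set x; y]]]].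

Lemma invD (Gam : finZmodType) (D : {set Gam}) : inv_closed D ->
  forall a, (- a \in D) = (a \in D).
Proof. by move=> hD a; apply/idP/idP => [/hD|/hD//]; rewrite opprK. Qed.

Lemma edge2 (Gam : finZmodType) (D S : {set Gam}) : inv_closed D -> 0 \notin D ->
  (2 * #|Ed D S| = pc D S S)%N.
Proof.
move=> hD h0.
have neq : forall a b : Gam, b - a \in D -> a != b.
  by move=> a b hab; apply/eqP => e; rewrite e subrr (negbTE h0) in hab.
rewrite pcE -[RHS]sum1_card (partition_big (fun p : Gam * Gam => [set p.1; p.2]) (fun E : {set Gam} => E \in Ed D S)).
  rewrite mulnC -sum_nat_const; apply: eq_bigr => E.
  rewrite inE => /andP[sub /existsP[x /existsP[y /and3P[xy dxy /eqP eE]]]].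
  rewrite sum1dep_card.
  have -> : [set p | (p \in PS D S S) && ([set p.1; p.2] == E)] = [set (x, y); (y, x)].
    apply/setP => -[a b]; rewrite !inE /= eE; apply/idP/idP.
      move=> /andP[/and3P[h1 h2 hd] /eqP e].
      have ain : a \in [set x; y] by rewrite -e !inE eqxx.
      have bin : b \in [set x; y] by rewrite -e !inE eqxx orbT.
      have ab := neq _ _ hd.
      rewrite !inE in ain bin.
      case/orP: ain => /eqP ea; case/orP: bin => /eqP eb; subst a b;
        rewrite ?eqxx ?orbT //; by rewrite eqxx in ab.
    have xS : x \in S by apply: (subsetP sub); rewrite eE !inE eqxx.
    have yS : y \in S by apply: (subsetP sub); rewrite eE !inE eqxx orbT.
    case/orP => /eqP [-> ->]; rewrite xS yS /= ?dxy ?eqxx //.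
    by rewrite -opprB invD // dxy /= setUC eqxx.
  by rewrite cards2 /= xpair_eqE negb_and xy.
move=> -[a b]; rewrite !inE /= => /and3P[h1 h2 hd].
apply/andP; split.
  by apply/subsetP => z; rewrite !inE => /orP[/eqP ->|/eqP ->].
by apply/existsP; exists a; apply/existsP; exists b; rewrite neq //= hd eqxx.
Qed.
Lemma Lsub (Gam : finZmodType) (x y v : Gam) : (y - v) - (x - v) = y - x.
Proof. by rewrite opprB addrA subrK. Qed.
Lemma Lcan (Gam : finZmodType) (a v : Gam) : (v + a) - v = a.
Proof. by rewrite addrC addKr. Qed.
Lemma Lcan2 (Gam : finZmodType) (a b v : Gam) : (v + a) - (v + b) = a - b.
Proof. by rewrite [v + a]addrC addrKA. Qed.

Definition nb (Gam : finZmodType) (D : {set Gam}) v := [set w | w - v \in D].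

Lemma swap (Gam : finZmodType) (D1 D2 : {set Gam}) v : inv_closed D1 ->
  pc D1 (nb D1 v) (nb D2 v) = pc D2 (nb D1 v) (nb D1 v).
Proof.
move=> hD.
have iD : forall a, (- a \in D1) = (a \in D1).
  by move=> a; apply/idP/idP => [/hD|/hD//]; rewrite opprK.
pose f (p : Gam * Gam) := (v + - (p.1 - v), v + ((p.2 - v) - (p.1 - v))).
have finv : involutive f.
  move=> [x y]; rewrite /f /= !Lcan (opprK (x - v)) subrK.
  by rewrite [v + (x - v)]addrC subrK [v + (y - v)]addrC subrK.
have finj : injective f by apply: inv_inj.
have h12 : forall p, p \in PS D1 (nb D1 v) (nb D2 v) -> f p \in PS D2 (nb D1 v) (nb D1 v).
  move=> [x y]; rewrite !inE /= => /and3P[h1 h2 h3].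
  by rewrite !Lcan iD h1 Lsub h3 Lcan2 (opprK (x - v)) -addrA addKr h2.
have h21 : forall p, p \in PS D2 (nb D1 v) (nb D1 v) -> f p \in PS D1 (nb D1 v) (nb D2 v).
  move=> [x y]; rewrite !inE /= => /and3P[h1 h2 h3].
  by rewrite !Lcan iD h1 Lsub h3 Lcan2 (opprK (x - v)) -addrA addKr h2.
rewrite !pcE; apply/eqP; rewrite eqn_leq; apply/andP; split.
  rewrite -(card_imset _ finj); apply: subset_leq_card.
  by apply/subsetP => _ /imsetP[p hp ->]; apply: h12.
rewrite -(card_imset _ finj); apply: subset_leq_card.
by apply/subsetP => _ /imsetP[p hp ->]; apply: h21.
Qed.

Definition rowv (Gam : finZmodType) (D S : {set Gam}) v : nat :=
  (\sum_(y in S) (((y - v)%R \in D) : nat))%N.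
Definition colv (Gam : finZmodType) (D S : {set Gam}) v : nat :=
  (\sum_(x in S) (((v - x)%R \in D) : nat))%N.

Lemma pcUU (Gam : finZmodType) (D S : {set Gam}) v : 0 \notin D -> v \notin S ->
  pc D (v |: S) (v |: S) = (rowv D S v + colv D S v + pc D S S)%N.
Proof.
move=> h0 hv; rewrite pcU1l // pcU1r // big_setU1 //= subrr (negbTE h0) /=.
by rewrite /rowv /colv addnA.
Qed.

Lemma ecolE (Gam : finZmodType) (X : cgraph Gam) (D : {set Gam}) j S :
  (forall x y, [&& cadj X x y & ccol X x y == j] = (y - x \in D)) ->
  ecol X j S = #|Ed D S|.
Proof.
move=> h; apply: eq_card => E; rewrite !inE; congr (_ && _).
apply: eq_existsb => x; apply: eq_existsb => y.
by rewrite -h; case: (x != y); case: (cadj X x y); case: (ccol X x y == j).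
Qed.

Theorem proposition2p3 (Gam : finZmodType) (R B : {set Gam}) :
  [disjoint R & B] ->
  inv_closed R -> inv_closed B ->
  0 \notin R -> 0 \notin B ->
  let G := cay_col B 1%N in
  let H := cay_col R 2%N in
  let X := cay_union B R in
  forall v : Gam,
    [/\ degc X 1 v = deg G v /\ degc X 2 v = deg H v,
        (ecolv X 1 v)%:Z - (ecolv X 2 v)%:Z =
          ((ecolv G 1 v)%:Z - (ecolv H 2 v)%:Z) +
          ((ecol H 2 (cnbhd G v))%:Z - (ecol G 1 (cnbhd H v))%:Z)
      & (sumset R B :&: R = set0 -> (ecolv H 2 v < ecolv G 1 v)%N ->
         (ecolv X 2 v < ecolv X 1 v)%N)].
Proof.
move=> hRB iR iB R0 B0 G H X v.
have dBR : forall a, a \in B -> (a \in R) = false.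
  by move=> a ha; apply: (disjointFl hRB ha).
have eX1 : forall S, ecol X 1 S = #|Ed B S|.
  move=> S; apply: ecolE => x y /=.
  by case hb: (y - x \in B); rewrite !inE ?hb /= ?andbF.
have eX2 : forall S, ecol X 2 S = #|Ed R S|.
  move=> S; apply: ecolE => x y /=.
  by case hb: (y - x \in B); rewrite !inE ?hb /= ?andbT // dBR.
have eG : forall S, ecol G 1 S = #|Ed B S|.
  by move=> S; apply: ecolE => x y /=; rewrite andbT.
have eH : forall S, ecol H 2 S = #|Ed R S|.
  by move=> S; apply: ecolE => x y /=; rewrite andbT.
set A' := nb B v. set C' := nb R v.
have cG : cnbhd G v = v |: A' by [].
have cH : cnbhd H v = v |: C' by [].
have cX : cnbhd X v = v |: (A' :|: C') by apply/setP => w; rewrite /A' /C' /cnbhd /= !inE.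
have vA : v \notin A' by rewrite inE subrr.
have vC : v \notin C' by rewrite inE subrr.
have vAC : v \notin A' :|: C' by rewrite inE negb_or vA vC.
have dAC : [disjoint A' & C'].
  by apply/pred0P => w; rewrite /A' /C' /= !inE; case hb: (w - v \in B) => //; rewrite dBR.
have dCA : [disjoint C' & A'] by rewrite disjoint_sym.
have iv : forall D (w : Gam), inv_closed D -> (v - w \in D) = (w - v \in D).
  by move=> D w hD; rewrite -opprB invD.
have rBC : rowv B C' v = 0%N.
  by apply: sum0 => y; rewrite inE => hy; apply/negP => hb; rewrite dBR in hy.
have cBC : colv B C' v = 0%N.
  by apply: sum0 => y; rewrite inE iv // => hy; apply/negP => hb; rewrite dBR in hy.
have rRA : rowv R A' v = 0%N.
  by apply: sum0 => y; rewrite inE => hy; rewrite dBR.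
have cRA : colv R A' v = 0%N.
  by apply: sum0 => y; rewrite inE => hy; rewrite iv // dBR.
have rU : forall D, rowv D (A' :|: C') v = (rowv D A' v + rowv D C' v)%N.
  by move=> D; rewrite /rowv -bigU //=; apply: eq_bigl => y; rewrite !inE.
have cU : forall D, colv D (A' :|: C') v = (colv D A' v + colv D C' v)%N.
  by move=> D; rewrite /colv -bigU //=; apply: eq_bigl => y; rewrite !inE.
have pU : forall D, pc D (A' :|: C') (A' :|: C') =
    (pc D A' A' + pc D A' C' + pc D C' A' + pc D C' C')%N.
  by move=> D; rewrite pcUl // !pcUr // !addnA.
have s1 := swap R v iB. have s2 := swap B v iR.
rewrite -/A' -/C' in s1 s2.
have c1 := pcC A' C' iB. have c2 := pcC A' C' iR.
have k1 := edge2 (v |: (A' :|: C')) iB B0.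
have k2 := edge2 (v |: (A' :|: C')) iR R0.
have k3 := edge2 (v |: A') iB B0.
have k4 := edge2 (v |: C') iR R0.
have k5 := edge2 (v |: C') iB B0.
have k6 := edge2 (v |: A') iR R0.
rewrite !pcUU // rU cU pU in k1.
rewrite !pcUU // rU cU pU in k2.
rewrite !pcUU // in k3 k4 k5 k6.
have key1 : ecolv X 1 v = #|Ed B (v |: (A' :|: C'))| by rewrite /ecolv cX eX1.
have key2 : ecolv X 2 v = #|Ed R (v |: (A' :|: C'))| by rewrite /ecolv cX eX2.
have key3 : ecolv G 1 v = #|Ed B (v |: A')| by rewrite /ecolv cG eG.
have key4 : ecolv H 2 v = #|Ed R (v |: C')| by rewrite /ecolv cH eH.
have key5 : ecol G 1 (cnbhd H v) = #|Ed B (v |: C')| by rewrite cH eG.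
have key6 : ecol H 2 (cnbhd G v) = #|Ed R (v |: A')| by rewrite cG eH.
rewrite key1 key2 key3 key4 key5 key6.
split.
- split; apply: eq_card => w; rewrite !inE /=.
    by case hb: (w - v \in B); rewrite !inE ?hb /= ?andbT ?andbF.
  by case hb: (w - v \in B); rewrite !inE ?hb /= ?andbT ?andbF // dBR.
- lia.
move=> hs hlt.
have z : pc B C' C' = 0%N.
  rewrite /pc big1 // => x; rewrite inE => hx; apply: sum0 => y; rewrite inE => hy.
  apply/negP => hb.
  have : (x - v) + (y - x) \in sumset R B :&: R.
    rewrite inE; apply/andP; split; first exact: imset2_f.
    by rewrite addrC -addrA addKr.
  by rewrite hs inE.
lia.
Qed.
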